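(* Let $\alpha\in(0,1)$. The equation $1/\alpha+(1+1/\alpha)z-z^{2-\alpha/2}=0$ has a unique positive root $z=r^*=r^*(\alpha)$, and $$\mathrm{g}(x,y,\alpha):=\frac{2+2(1+\alpha)x-\alpha x^{2-\alpha/2}}{1+x}-\frac{\alpha y^{2-\alpha/2}}{1+y}>0\qquad\text{for all } 0\le x,y<r^*.$$ *)

(* Defs.v *)
(* MathComp + MathComp-Analysis, over an arbitrary R : realType.
   Real powers z^p are mathcomp-analysis' powR (written z `^ p), with 0 `^ p = 0 for p <> 0. *)
From HB Require Import structures.
From mathcomp Require Import all_boot all_order all_algebra.
From mathcomp Require Import all_classical all_reals all_analysis.
Set Implicit Arguments. Unset Strict Implicit. Unset Printing Implicit Defensive.
Import Order.TTheory GRing.Theory Num.Theory.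
Local Open Scope ring_scope.

Definition rstar_eq {R : realType} (a z : R) : R :=
  a^-1 + (1 + a^-1) * z - z `^ (2 - a / 2).

Definition gfun {R : realType} (x y a : R) : R :=
  (2 + 2 * (1 + a) * x - a * x `^ (2 - a / 2)) / (1 + x)
  - a * y `^ (2 - a / 2) / (1 + y).

(* Main.v *)
Require Import Defs.
From HB Require Import structures.
From mathcomp Require Import all_boot all_order all_algebra.
From mathcomp Require Import all_classical all_reals all_analysis.
From mathcomp Require Import ring lra.
Import Order.TTheory GRing.Theory Num.Theory.
Import numFieldNormedType.Exports.
Local Open Scope classical_set_scope.
Local Open Scope ring_scope.

Lemma f_cont (R : realType) (a p M : R) : 1 <= M ->
  {within `[1, M], continuous (fun z : R => a^-1 + (1 + a^-1) * z - z `^ p)}.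
Proof.
move=> M1; apply: derivable_within_continuous => z; rewrite in_itv /= => /andP[z1 _].
apply: derivableB; last by apply: derivable_powR; rewrite in_itv /= andbT; lra.
apply: derivableD; first exact: derivable_cst.
apply: derivableM; first exact: derivable_cst.
exact: derivable_id.
Qed.

Lemma powq (R : realType) (a z : R) : 0 < a -> a < 1 -> 0 <= z ->
  z `^ (2 - a / 2) = z * z `^ (1 - a / 2).
Proof.
move=> ha0 ha1 z0; rewrite -mulr_powRB1 //; last lra.
by congr (_ * _ `^ _); lra.
Qed.

Theorem lemma2p1 (R : realType) (a : R) (ha0 : 0 < a) (ha1 : a < 1) :
  exists r : R,
    [/\ 0 < r, rstar_eq a r = 0,
        (forall z : R, 0 < z -> rstar_eq a z = 0 -> z = r)
      & (forall x y : R, 0 <= x -> x < r -> 0 <= y -> y < r -> 0 < gfun x y a)].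
Proof.
set q := 1 - a / 2.
have q0 : 0 < q by rewrite /q; lra.
set b := a^-1.
have b0 : 0 < b by rewrite /b invr_gt0.
have ab : a * b = 1 by rewrite /b mulfV // gt_eqF.
have fE : forall z, 0 <= z -> rstar_eq a z = b + (1 + b) * z - z * z `^ q.
  by move=> z z0; rewrite /rstar_eq powq.
set K := 2 + 2 * b.
have K1 : 1 <= K by rewrite /K; lra.
set M := K `^ q^-1.
have M1 : 1 <= M.
  have qi : 0 <= q^-1 by rewrite invr_ge0; exact: ltW.
  have := ler_powR K1 qi.
  by rewrite powRr0.
have MK : M `^ q = K.
  by rewrite /M -powRrM mulVf ?gt_eqF // powRr1 //; lra.
have fM : rstar_eq a M < 0.
  rewrite fE; last lra.
  rewrite MK /K; nra.
have f1 : 0 < rstar_eq a 1.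
  rewrite fE; last lra.
  rewrite powR1; lra.
have [r rin fr] : exists2 c, c \in `[1, M] & rstar_eq a c = 0.
  apply: IVT => //.
    exact: f_cont.
  rewrite ge_min le_max; apply/andP; split; apply/orP.
    by right; exact: ltW.
  by left; exact: ltW.
have r1 : 1 <= r by move: rin; rewrite in_itv /= => /andP[].
have r0 : 0 < r by lra.
have frE := fE r (ltW r0); rewrite fr in frE.
have U0 : 0 <= r `^ q by exact: powR_ge0.
exists r; split => //.
- move=> z z0 fz; have fzE := fE z (ltW z0); rewrite fz in fzE.
  have Z0 : 0 <= z `^ q by exact: powR_ge0.
  case: (ltgtP z r) => // zr.
    have := gt0_ltr_powR q0 (ltW z0 : z \in Num.nneg) (ltW r0 : r \in Num.nneg) zr.
    move=> ZU.
    have h1 : 0 < z * r * (r `^ q - z `^ q) by rewrite !mulr_gt0 // subr_gt0.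
    have h2 : 0 < b * (r - z) by rewrite mulr_gt0 // subr_gt0.
    have h3 : r * (b + (1 + b) * z - z * z `^ q) - z * (b + (1 + b) * r - r * r `^ q) = b * (r - z) + z * r * (r `^ q - z `^ q) by ring.
    rewrite -fzE -frE in h3; lra.
  have := gt0_ltr_powR q0 (ltW r0 : r \in Num.nneg) (ltW z0 : z \in Num.nneg) zr.
  move=> ZU.
  have h1 : 0 < z * r * (z `^ q - r `^ q) by rewrite !mulr_gt0 // subr_gt0.
  have h2 : 0 < b * (z - r) by rewrite mulr_gt0 // subr_gt0.
  have h3 : z * (b + (1 + b) * r - r * r `^ q) - r * (b + (1 + b) * z - z * z `^ q) = b * (z - r) + z * r * (z `^ q - r `^ q) by ring.
  rewrite -fzE -frE in h3; lra.
- move=> x y x0 xr y0 yr.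
  have XU := ge0_ler_powR (ltW q0) (x0 : x \in Num.nneg) (ltW r0 : r \in Num.nneg) (ltW xr).
  have YU := ge0_ler_powR (ltW q0) (y0 : y \in Num.nneg) (ltW r0 : r \in Num.nneg) (ltW yr).
  rewrite /gfun !powq //.
  set X := x `^ q in XU *; set Y := y `^ q in YU *; set U := r `^ q in XU YU frE U0.
  have aU : a * r * U = 1 + (1 + a) * r.
    have -> : 1 + (1 + a) * r = a * (b + (1 + b) * r) by nra.
    nra.
  have hY : a * y * Y < 1 + (1 + a) * y.
    have h0 : 0 <= a * y * (U - Y) by rewrite !mulr_ge0 // ?subr_ge0 // ltW.
    have h1 : a * y * Y <= a * y * U by nra.
    suff : a * y * U * r < (1 + (1 + a) * y) * r by nra.
    nra.
  have h0 : 0 <= a * x * (U - X) by rewrite !mulr_ge0 // ?subr_ge0 // ltW.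
  have hX : a * x * X <= a * x * U by nra.
  set T := (1 + r + a * r) / (1 + r).
  have T2 : a * y * Y / (1 + y) < T.
    rewrite /T ltr_pdivlMr; last lra.
    rewrite mulrAC ltr_pdivrMr; last lra.
    nra.
  have T1 : T <= (2 + 2 * (1 + a) * x - a * (x * X)) / (1 + x).
    rewrite /T ler_pdivlMr; last lra.
    rewrite mulrAC ler_pdivrMr; last lra.
    suff : (1 + r + a * r) * (1 + x) * r <= (2 + 2 * (1 + a) * x - a * x * U) * (1 + r) * r by nra.
    have e : (2 + 2 * (1 + a) * x - a * x * U) * (1 + r) * r - (1 + r + a * r) * (1 + x) * r = (r - x) * (1 + r - a * r) - (1 + r) * x * (a * r * U - (1 + (1 + a) * r)) by ring.
    rewrite aU subrr mulr0 subr0 in e.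
    have : 0 <= (r - x) * (1 + r - a * r) by rewrite mulr_ge0 // ?subr_ge0 ?(ltW xr) //; nra.
    lra.
  have -> : a * (y * Y) = a * y * Y by rewrite mulrA.
  lra.
Qed.
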